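(* Let $X$ be a compact Hausdorff space and let $\mathcal{F}=\{X;f_\lambda\mid\lambda\in\Lambda\}$ be a minimal IFS. Let $n$ be a positive integer. Then there exist an $\mathcal{F}^{n}$-minimal set $M$ and an integer $1\le t\leq n$ such that: (1) $X$ is the disjoint union of $M,\mathcal{F}(M),\dots,\mathcal{F}^{t-1}(M)$; (2) each of the sets $M,\mathcal{F}(M),\dots,\mathcal{F}^{t-1}(M)$ is clopen; (3) the family $\{M,\mathcal{F}(M),\dots,\mathcal{F}^{t-1}(M)\}$ is exactly the collection of all subsets of $X$ that are $\mathcal{F}^{t}$-minimal, and also exactly the collection of all subsets of $X$ that are $\mathcal{F}^{n}$-minimal.
   Context: $\Lambda$ is a finite nonempty set and $\mathcal{F}=\{X;f_\lambda\mid\lambda\in\Lambda\}$ is an iterated function system (IFS) of continuous maps $f_\lambda:X\to X$. $\Lambda^{\mathbb{Z}_+}$ denotes the set of sequences $\sigma=(\lambda_1,\lambda_2,\dots)$ in $\Lambda$, and $\mathcal{F}_{\sigma_n}=f_{\lambda_n}\circ\cdots\circ f_{\lambda_1}$. For $A\subseteq X$, $\mathcal{F}(A)=\bigcup_{\lambda\in\Lambda}f_\lambda(A)$, $\mathcal{F}^k(A)=\bigcup_{\lambda_1,\dots,\lambda_k\in\Lambda}f_{\lambda_k}\circ\cdots\circ f_{\lambda_1}(A)$, $\mathcal{F}^0(A)=A$. A nonempty closed set $M\subseteq X$ is $\mathcal{F}^n$-minimal if $\mathcal{F}_{\sigma_n}(M)=M$ for all $\sigma\in\Lambda^{\mathbb{Z}_+}$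 and $\mathcal{F}_{\sigma_n}(A)\neq A$ for every nonempty proper subset $A\subsetneq M$ and every $\sigma$. The IFS $\mathcal{F}$ is minimal if the only $\mathcal{F}^1$-minimal set is $X$ itself; equivalently, for every $x\in X$ the set $\{f_{\lambda_k}\circ\cdots\circ f_{\lambda_1}(x): k>0,\ \lambda_1,\dots,\lambda_k\in\Lambda\}$ is dense in $X$. *)

(* Defs.v *)
From Stdlib Require List.
From mathcomp Require Import all_boot.
Set Implicit Arguments. Unset Strict Implicit. Unset Printing Implicit Defensive.

Definition set_eq {X : Type} (A B : X -> Prop) : Prop := forall x, A x <-> B x.
Definition subset {X : Type} (A B : X -> Prop) : Prop := forall x, A x -> B x.
Definition nonempty {X : Type} (A : X -> Prop) : Prop := exists x, A x.
Definition setT {X : Type} : X -> Prop := fun _ => True.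

Record topology (X : Type) := Topology {
  is_open : (X -> Prop) -> Prop;
  open_setT : is_open (fun _ => True);
  open_inter : forall U V, is_open U -> is_open V -> is_open (fun x => U x /\ V x);
  open_union : forall (Fam : (X -> Prop) -> Prop),
      (forall U, Fam U -> is_open U) ->
      is_open (fun x => exists U, Fam U /\ U x)
}.

Section Topo.
Variables (X : Type) (T : topology X).
Definition is_closed (A : X -> Prop) : Prop := is_open T (fun x => ~ A x).
Definition is_clopen (A : X -> Prop) : Prop := is_open T A /\ is_closed A.
Definition compact_space : Prop :=
  forall Fam : (X -> Prop) -> Prop,
    (forall U, Fam U -> is_open T U) ->
    (forall x, exists U, Fam U /\ U x) ->
    exists l : list (X -> Prop),
      (forall U, List.In U l -> Fam U) /\ (forall x, exists U, List.In U l /\ U x).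
Definition hausdorff : Prop :=
  forall x y : X, x <> y -> exists U V, is_open T U /\ is_open T V /\
    U x /\ V y /\ (forall z, ~ (U z /\ V z)).
Definition continuous (g : X -> X) : Prop :=
  forall U, is_open T U -> is_open T (fun x => U (g x)).
End Topo.

Definition Fimg {X : Type} {Lam : Type} (f : Lam -> X -> X) (A : X -> Prop) : X -> Prop :=
  fun y => exists l x, A x /\ f l x = y.
Fixpoint Fpow {X : Type} {Lam : Type} (f : Lam -> X -> X) (k : nat) (A : X -> Prop)
  : X -> Prop :=
  match k with 0 => A | k'.+1 => Fimg f (Fpow f k' A) end.

Definition Fminimal {X : Type} (T : topology X) {Lam : Type} (f : Lam -> X -> X)
  (n : nat) (M : X -> Prop) : Prop :=
  nonempty M /\ is_closed T M /\ set_eq (Fpow f n M) M /\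
  (forall A, nonempty A -> is_closed T A -> subset A M -> ~ set_eq A M ->
     ~ set_eq (Fpow f n A) A).

Definition minimal_IFS {X : Type} (T : topology X) {Lam : Type} (f : Lam -> X -> X) : Prop :=
  forall A, Fminimal T f 1 A <-> set_eq A setT.

(* Main.v *)
Require Import Defs.
From mathcomp Require Import all_boot.
From mathcomp Require boolp classical_sets.
From mathcomp Require Import zify.
From Stdlib Require Import Lia.
From Stdlib Require Import Classical FunctionalExtensionality PropExtensionality.
Set Implicit Arguments. Unset Strict Implicit. Unset Printing Implicit Defensive.

Lemma seteqE (X : Type) (A B : X -> Prop) : set_eq A B -> A = B.
Proof.
move=> H; apply: functional_extensionality => x.
by apply: propositional_extensionality; apply: H.
Qed.

Lemma open_eq (X : Type) (T : topology X) (A B : X -> Prop) :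
  (forall x, A x <-> B x) -> is_open T A -> is_open T B.
Proof. by move=> H; rewrite (seteqE H). Qed.

Lemma open_or (X : Type) (T : topology X) (A B : X -> Prop) :
  is_open T A -> is_open T B -> is_open T (fun x => A x \/ B x).
Proof.
move=> HA HB.
have H := @open_union X T (fun U => U = A \/ U = B).
 apply: (open_eq _ (H _)).
- move=> x; split.
  + by move=> [U [[->|->] HU]]; [left|right].
  + by move=> [HA'|HB']; [exists A|exists B]; split => //; [left|right].
- by move=> U [->|->].
Qed.

Lemma closed_and (X : Type) (T : topology X) (A B : X -> Prop) :
  is_closed T A -> is_closed T B -> is_closed T (fun x => A x /\ B x).
Proof.
rewrite /is_closed => HA HB.
apply: (open_eq _ (open_or HA HB)) => x; split.
- by move=> [H|H] [? ?].
- move=> H; case: (classic (A x)) => Ha; last by left.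
  by right => Hb; apply: H.
Qed.

Lemma closed_or (X : Type) (T : topology X) (A B : X -> Prop) :
  is_closed T A -> is_closed T B -> is_closed T (fun x => A x \/ B x).
Proof.
rewrite /is_closed => HA HB.
apply: (open_eq _ (open_inter HA HB)) => x; split.
- by move=> [H1 H2] [H|H].
- by move=> H; split => H'; apply: H; [left|right].
Qed.

Lemma closed_empty (X : Type) (T : topology X) : is_closed T (fun _ => False).
Proof. by apply: (open_eq _ (open_setT T)) => x; split => // _ []. Qed.

Lemma closed_full (X : Type) (T : topology X) : is_closed T (fun _ => True).
Proof.
have H := @open_union X T (fun _ : X -> Prop => False).
 apply: (open_eq _ (H _)) => //.
by move=> x; split => [[U [[]]]|/(_ I)].
Qed.

Lemma closed_fam (X : Type) (T : topology X) (Ch : (X -> Prop) -> Prop) :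
  (forall C, Ch C -> is_closed T C) -> is_closed T (fun x => forall C, Ch C -> C x).
Proof.
move=> HC.
have H := @open_union X T (fun U => exists C, Ch C /\ U = fun x => ~ C x).
 apply: (open_eq _ (H _)).
- move=> x; split.
  + by move=> [U [[C [HC' ->]] HU]] H'; apply: HU; apply: H'.
  + move=> H'; apply: NNPP => H2; apply: H' => C HCC; apply: NNPP => HCx.
    by apply: H2; exists (fun x => ~ C x); split => //; exists C.
- by move=> U [C [HCC ->]]; apply: HC.
Qed.

Lemma closed_finU (X : Type) (T : topology X) (G : nat -> X -> Prop) (t : nat) :
  (forall i, i < t -> is_closed T (G i)) ->
  is_closed T (fun x => exists i, i < t /\ G i x).
Proof.
elim: t => [|t IH] H.
  apply: (open_eq _ (closed_empty T)) => x; split => _ //.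
  by move=> [i []].
have H1 : is_closed T (fun x => (exists i, i < t /\ G i x) \/ G t x).
  apply: closed_or; last exact: H.
  by apply: IH => i Hi; apply: H; apply: ltnW.
apply: (open_eq _ H1) => x; split => Hn Hx; apply: Hn.
- case: Hx => i [Hi Hg]; rewrite ltnS leq_eqVlt in Hi.
  case/orP: Hi => [/eqP Ei|Hi].
  + by right; rewrite -Ei.
  + by left; exists i.
- case: Hx => [[i [Hi Hg]]|Hg].
  + by exists i; split => //; apply: ltnW.
  + by exists t.
Qed.

Lemma Fimg_mono (X Lam : Type) (f : Lam -> X -> X) (A B : X -> Prop) :
  Defs.subset A B -> Defs.subset (Fimg f A) (Fimg f B).
Proof. by move=> H y [l [x [Ax <-]]]; exists l, x; split => //; apply: H. Qed.

Lemma Fpow_mono (X Lam : Type) (f : Lam -> X -> X) k (A B : X -> Prop) :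
  Defs.subset A B -> Defs.subset (Fpow f k A) (Fpow f k B).
Proof. by elim: k => [|k IH] //= H; apply: Fimg_mono; apply: IH. Qed.

Lemma Fpow_add (X Lam : Type) (f : Lam -> X -> X) i j (A : X -> Prop) :
  Fpow f (i + j) A = Fpow f i (Fpow f j A).
Proof. by elim: i => [|i IH] //=; rewrite IH. Qed.

Lemma Fpow_ne (X : Type) (Lam : finType) (HLam : 0 < #|Lam|) (f : Lam -> X -> X) k
  (A : X -> Prop) : nonempty A -> nonempty (Fpow f k A).
Proof.
case/card_gt0P: HLam => l0 _.
elim: k => [|k IH] //= H; case: (IH H) => x Hx.
by exists (f l0 x), l0, x.
Qed.

Lemma sep_one (X : Type) (T : topology X) (Lam : Type) (f : Lam -> X -> X)
  (Hcont : forall l, continuous T (f l))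
  (Hcpt : compact_space T) (Hhaus : hausdorff T) (A : X -> Prop) (HA : is_closed T A)
  (y : X) (l : Lam) : (forall x, A x -> f l x <> y) ->
  exists V, is_open T V /\ V y /\ forall x, A x -> ~ V (f l x).
Proof.
move=> Hy.
pose Fam := fun W : X -> Prop => W = (fun z => ~ A z) \/
   exists x U V, A x /\ is_open T U /\ is_open T V /\ U (f l x) /\ V y /\
     (forall z, ~ (U z /\ V z)) /\ W = (fun z => U (f l z)) /\
     forall z, U z -> ~ V z.
have key : forall L, (forall W, List.In W L -> Fam W) -> exists V, is_open T V /\ V y /\
    forall W, List.In W L -> forall x, A x -> W x -> ~ V (f l x).
  elim => [|W L IH] HL.
    exists (fun _ => True); split; first by apply: open_setT.
    by split => // W [].
  have [V [HV [Vy HVL]]] := IH (fun W' HW' => HL W' (or_intror HW')).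
  case: (HL W (or_introl erefl)) => [->|[x [U [V' [Ax [HU [HV' [Ux [V'y [Hdis [-> HUV]]]]]]]]]]].
  - exists V; split => //; split => // W' [<-|HW'] x' Ax' Wx'.
    + by case: Wx'.
    + exact: (HVL W' HW' x' Ax' Wx').
  - exists (fun z => V' z /\ V z); split; first exact: open_inter.
    split => // W' [<-|HW'] x' Ax' Wx' [H1 H2]; first exact: (HUV _ Wx' H1).
    exact: (HVL W' HW' x' Ax' Wx').
have [L [HL Hcov]] : exists L : list (X -> Prop),
    (forall U, List.In U L -> Fam U) /\ (forall x, exists U, List.In U L /\ U x).
  apply: Hcpt.
  - move=> U [->|[x [U' [V' [_ [HU' [_ [_ [_ [_ [-> _]]]]]]]]]]]; first exact: HA.
    exact: Hcont.
  - move=> z; case: (classic (A z)) => Az; last first.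
      by exists (fun z => ~ A z); split => //; left.
    have [U [V [HU [HV [Uf [Vy Hd]]]]]] := Hhaus (f l z) y (Hy z Az).
    exists (fun z => U (f l z)); split => //; right.
    exists z, U, V; do 7 (split => //).
    by move=> w Uw Vw; apply: (Hd w).
have [V [HV [Vy HVL]]] := key L HL.
exists V; split => //; split => // x Ax.
have [W [HW Wx]] := Hcov x.
exact: (HVL W HW x Ax Wx).
Qed.

Lemma Fimg_closed (X : Type) (T : topology X) (Lam : finType) (f : Lam -> X -> X)
  (Hcont : forall l, continuous T (f l))
  (Hcpt : compact_space T) (Hhaus : hausdorff T) (A : X -> Prop) :
  is_closed T A -> is_closed T (Fimg f A).
Proof.
move=> HA.
have sep : forall y, ~ Fimg f A y -> exists V, is_open T V /\ V y /\
    forall l x, A x -> ~ V (f l x).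
  move=> y Hy.
  have key : forall s : seq Lam, exists V, is_open T V /\ V y /\
      forall l, l \in s -> forall x, A x -> ~ V (f l x).
    elim => [|l s [V [HV [Vy HVs]]]].
      by exists (fun _ => True); split; [apply: open_setT|split] => //.
    have [V' [HV' [V'y HV'l]]] : exists V, is_open T V /\ V y /\ forall x, A x -> ~ V (f l x).
      apply: (sep_one Hcont Hcpt Hhaus HA) => x Ax Hfx.
      by apply: Hy; exists l, x.
    exists (fun z => V' z /\ V z); split; first exact: open_inter.
    split => // l'; rewrite in_cons => /orP [/eqP ->|Hl'] x Ax [H1 H2].
    + exact: (HV'l x Ax H1).
    + exact: (HVs l' Hl' x Ax H2).
  have [V [HV [Vy HVs]]] := key (enum Lam).
  exists V; split => //; split => // l x Ax; apply: HVs => //.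
  by rewrite mem_enum.
have H := @open_union X T (fun V => is_open T V /\ forall l x, A x -> ~ V (f l x)).
apply: (open_eq _ (H _)); last by move=> U [].
move=> y; split.
- by move=> [U [[_ HU] Uy]] [l [x [Ax Hfx]]]; apply: (HU l x Ax); rewrite Hfx.
- move=> Hy; have [V [HV [Vy HVs]]] := sep y Hy.
  by exists V.
Qed.

Lemma Fpow_closed (X : Type) (T : topology X) (Lam : finType) (f : Lam -> X -> X)
  (Hcont : forall l, continuous T (f l))
  (Hcpt : compact_space T) (Hhaus : hausdorff T) k (A : X -> Prop) :
  is_closed T A -> is_closed T (Fpow f k A).
Proof.
by elim: k => [|k IH] //= HA; apply: (Fimg_closed Hcont Hcpt Hhaus); apply: IH.
Qed.

Lemma chain_ne (X : Type) (T : topology X) (Hcpt : compact_space T)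
  (Ch : (X -> Prop) -> Prop) : (exists C, Ch C) ->
  (forall C, Ch C -> nonempty C /\ is_closed T C) ->
  (forall C D, Ch C -> Ch D -> Defs.subset C D \/ Defs.subset D C) ->
  exists x, forall C, Ch C -> C x.
Proof.
move=> [C0 HC0] Hne Htot; apply: NNPP => Hno.
pose Fam := fun U : X -> Prop => exists C, Ch C /\ U = fun x => ~ C x.
have [L [HL Hcov]] : exists L : list (X -> Prop),
    (forall U, List.In U L -> Fam U) /\ (forall x, exists U, List.In U L /\ U x).
  apply: Hcpt.
  - by move=> U [C [HC ->]]; case: (Hne C HC).
  - move=> x; apply: NNPP => Hx; apply: Hno; exists x => C HC.
    apply: NNPP => HCx; apply: Hx; exists (fun x => ~ C x); split => //.
    by exists C.
have key : forall L, (forall U, List.In U L -> Fam U) ->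
    exists C, Ch C /\ forall W, List.In W L -> forall x, C x -> ~ W x.
  elim => [|W L' IH] HL'.
    by exists C0; split => // W [].
  have [C [HC HCL]] := IH (fun U HU => HL' U (or_intror HU)).
  have [D [HD ->]] := HL' W (or_introl erefl).
  case: (Htot C D HC HD) => HCD.
  - exists C; split => // W' [<-|HW'] x Cx; first by apply; apply: HCD.
    exact: HCL.
  - exists D; split => // W' [<-|HW'] x Dx; first by [].
    by apply: (HCL W' HW'); apply: HCD.
have [C [HC HCL]] := key L HL.
have [[x Cx] _] := Hne C HC.
have [W [HW Wx]] := Hcov x.
exact: (HCL W HW x Cx Wx).
Qed.

Definition SM (X : Type) (T : topology X) (Lam : Type) (f : Lam -> X -> X)
  (k : nat) (M : X -> Prop) : Prop :=
  nonempty M /\ is_closed T M /\ Fpow f k M = M /\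
  forall C, nonempty C -> is_closed T C -> Defs.subset C M ->
     Defs.subset (Fpow f k C) C -> Defs.subset M C.

Lemma zorn_min (X : Type) (T : topology X) (Lam : finType) (HLam : 0 < #|Lam|)
  (f : Lam -> X -> X) (Hcont : forall l, continuous T (f l))
  (Hcpt : compact_space T) (Hhaus : hausdorff T) k (A : X -> Prop) :
  nonempty A -> is_closed T A -> Defs.subset (Fpow f k A) A ->
  exists B, Defs.subset B A /\ SM T f k B.
Proof.
move=> Ane Acl Ainv.
pose good := fun C : X -> Prop => nonempty C /\ is_closed T C /\
   Defs.subset C A /\ Defs.subset (Fpow f k C) C.
pose TT := {C : X -> Prop | good C}.
have gA : good A by split => //; split => //; split.
pose R := fun a b : TT => boolp.asbool (Defs.subset (proj1_sig b) (proj1_sig a)).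
have [t Ht] : exists t, classical_sets.premaximal (fun x y => R x y) t.
  apply: (@classical_sets.ZL_preorder TT (exist _ A gA) R).
  - by move=> a; apply/boolp.asboolP.
  - move=> a b c /boolp.asboolP Hab /boolp.asboolP Hbc; apply/boolp.asboolP.
    by move=> x Hx; apply: Hab; apply: Hbc.
  - move=> Ach Htot.
    pose Ch := fun C : X -> Prop => C = A \/ exists c, Ach c /\ C = proj1_sig c.
    pose I := fun x => forall C, Ch C -> C x.
    have ChA : forall C, Ch C -> Defs.subset C A.
      by move=> C [->|[c [_ ->]]] // x; case: (proj2_sig c) => _ [_ [HA _]]; apply: HA.
    have gI : good I.
      split; last split; last split.
      - apply: (chain_ne Hcpt); first by exists A; left.
        + move=> C [->|[c [_ ->]]] //; by case: (proj2_sig c) => ? [? _].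
        + move=> C D HC HD; case: HC => [->|[c [Hc ->]]].
            by right; apply: ChA.
          case: HD => [->|[d [Hd ->]]]; first by left; apply: ChA; right; exists c.
          by case: (Htot c d Hc Hd) => /boolp.asboolP H; [right|left].
      - apply: closed_fam => C [->|[c [_ ->]]] //; by case: (proj2_sig c) => ? [? _].
      - by move=> x Ix; apply: Ix; left.
      - move=> y Hy C HC.
        have HCinv : Defs.subset (Fpow f k C) C.
          case: HC => [->|[c [_ ->]]] //; by case: (proj2_sig c) => ? [? [? ?]].
        apply: HCinv; apply: (Fpow_mono (A := I)) Hy => x Ix; exact: Ix.
    exists (exist _ I gI) => s Hs; apply/boolp.asboolP => x Ix /=.
    by apply: Ix; right; exists s.
case: t Ht => B gB Ht.
case: (gB) => Bne [Bcl [BA Binv]].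
have minB : forall C, nonempty C -> is_closed T C -> Defs.subset C B ->
     Defs.subset (Fpow f k C) C -> Defs.subset B C.
  move=> C Cne Ccl CB Cinv.
  have gC : good C.
    by split => //; split => //; split => // x Cx; apply: BA; apply: CB.
  have := Ht (exist _ C gC).
  move=> H; have /boolp.asboolP := H (introT (boolp.asboolP _) CB).
  by [].
exists B; split => //; split => //; split => //; split => //.
apply: seteqE => x; split; first exact: Binv.
move: x; apply: minB.
- exact: Fpow_ne.
- exact: Fpow_closed.
- exact: Binv.
- by apply: Fpow_mono.
Qed.

Lemma Fmin_of_SM (X : Type) (T : topology X) (Lam : Type) (f : Lam -> X -> X) k M :
  SM T f k M -> Fminimal T f k M.
Proof.
move=> [Mne [Mcl [Minv Mmin]]]; split => //; split => //; split.
  by rewrite Minv.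
move=> A Ane Acl AM AnM AA; apply: AnM => x; split; first exact: AM.
move: x; apply: Mmin => // x Hx; by apply/AA.
Qed.

Lemma SM_of_Fmin (X : Type) (T : topology X) (Lam : finType) (HLam : 0 < #|Lam|)
  (f : Lam -> X -> X) (Hcont : forall l, continuous T (f l))
  (Hcpt : compact_space T) (Hhaus : hausdorff T) k M :
  Fminimal T f k M -> SM T f k M.
Proof.
move=> [Mne [Mcl [Minv Mmin]]]; split => //; split => //; split.
  exact: seteqE.
move=> C Cne Ccl CM Cinv.
have [B [BC [Bne [Bcl [Binv _]]]]] := zorn_min HLam Hcont Hcpt Hhaus Cne Ccl Cinv.
have HBM : set_eq B M.
  apply: NNPP => HBM; apply: (Mmin B Bne Bcl) => //.
  - by move=> x Bx; apply: CM; apply: BC.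
  - by rewrite Binv.
by move=> x Mx; apply: BC; apply/HBM.
Qed.

Lemma SM_inter (X : Type) (T : topology X) (Lam : Type) (f : Lam -> X -> X) k M1 M2 :
  SM T f k M1 -> SM T f k M2 -> (exists x, M1 x /\ M2 x) -> M1 = M2.
Proof.
move=> H1 H2 Hx.
have key : forall M1 M2, SM T f k M1 -> SM T f k M2 -> (exists x, M1 x /\ M2 x) ->
    Defs.subset M1 M2.
  move=> N1 N2 [N1ne [N1cl [N1inv N1min]]] [N2ne [N2cl [N2inv N2min]]] HN x N1x.
  have := N1min (fun x => N1 x /\ N2 x) HN (closed_and N1cl N2cl).
  move=> /(_ (fun z => @proj1 _ _)) H.
  have : Defs.subset (Fpow f k (fun x : X => N1 x /\ N2 x)) (fun x : X => N1 x /\ N2 x).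
    move=> z Hz; split.
    - by rewrite -N1inv; apply: (Fpow_mono (A := fun x => N1 x /\ N2 x)) Hz => w [].
    - by rewrite -N2inv; apply: (Fpow_mono (A := fun x => N1 x /\ N2 x)) Hz => w [].
  by move=> /H /(_ x N1x) [].
apply: seteqE => x; split; first exact: key.
apply: key => //; case: Hx => y [? ?]; by exists y.
Qed.

Lemma Fpow_mul_eq (X Lam : Type) (f : Lam -> X -> X) k q (M : X -> Prop) :
  Fpow f k M = M -> Fpow f (q * k) M = M.
Proof. by move=> H; elim: q => [|q IH] //; rewrite mulSn Fpow_add IH H. Qed.

Lemma Fpow_mul_sub (X Lam : Type) (f : Lam -> X -> X) k q (C : X -> Prop) :
  Defs.subset (Fpow f k C) C -> Defs.subset (Fpow f (q * k) C) C.
Proof.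
move=> H; elim: q => [|q IH] //; rewrite mulSn Fpow_add => x Hx.
by apply: H; apply: (Fpow_mono IH).
Qed.

Theorem lemma3p2 (X : Type) (T : topology X) (Lam : finType) (HLam : 0 < #|Lam|)
  (f : Lam -> X -> X) (Hcont : forall l, continuous T (f l))
  (Hcpt : compact_space T) (Hhaus : hausdorff T)
  (Hmin : minimal_IFS T f) (n : nat) (Hn : 0 < n) :
  exists (M : X -> Prop) (t : nat),
    Fminimal T f n M /\ 1 <= t <= n /\
    (* (1) X is the disjoint union of M, F(M), ..., F^(t-1)(M) *)
    (forall x, exists i, i < t /\ Fpow f i M x) /\
    (forall i j x, i < t -> j < t -> i <> j -> ~ (Fpow f i M x /\ Fpow f j M x)) /\
    (* (2) each F^i(M), i < t, is clopen *)
    (forall i, i < t -> is_clopen T (Fpow f i M)) /\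
    (* (3) these are exactly the F^t-minimal sets, and exactly the F^n-minimal sets *)
    (forall A, Fminimal T f t A <-> exists i, i < t /\ set_eq A (Fpow f i M)) /\
    (forall A, Fminimal T f n A <-> exists i, i < t /\ set_eq A (Fpow f i M)).
Proof.
have SMX : SM T f 1 Defs.setT.
  apply: (SM_of_Fmin HLam Hcont Hcpt Hhaus); apply/Hmin => x; by [].
have xmin : forall C, nonempty C -> is_closed T C -> Defs.subset (Fimg f C) C ->
    forall x, C x.
  move=> C Cne Ccl Cinv x; case: SMX => _ [_ [_ H]].
  by apply: (H C Cne Ccl) => //.
have [x0 _] : nonempty (@Defs.setT X) by case: SMX.
have [M [_ SMM]] : exists M, Defs.subset M Defs.setT /\ SM T f n M.
  apply: (zorn_min HLam Hcont Hcpt Hhaus) => //.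
  - by exists x0.
  - exact: closed_full.
case: (SMM) => Mne [Mcl [Minv Mmin]].
have exP : exists t, boolp.asbool (0 < t /\ Fpow f t M = M).
  by exists n; apply/boolp.asboolP.
case: (ex_minnP exP) => t /boolp.asboolP [t0 Mt] tmin.
have tn : t <= n by apply: tmin; apply/boolp.asboolP.
have SMi : forall i, i < n -> SM T f n (Fpow f i M).
  move=> i ilt; split; first exact: Fpow_ne.
  split; first exact: Fpow_closed.
  split; first by rewrite -Fpow_add addnC Fpow_add Minv.
  move=> C Cne Ccl CM Cinv.
  have H1 : Defs.subset (Fpow f (n - i) C) M.
    move=> x Hx; rewrite -Minv -(subnK (ltnW ilt)) Fpow_add.
    exact: (Fpow_mono CM).
  have H2 := Mmin _ (@Fpow_ne X Lam HLam f (n - i) C Cne) (Fpow_closed Hcont Hcpt Hhaus _ Ccl) H1.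
  have H3 : Defs.subset M (Fpow f (n - i) C).
    apply: H2 => x; rewrite -Fpow_add addnC Fpow_add.
    exact: (Fpow_mono Cinv).
  move=> x Hx; apply: Cinv; rewrite -(subnK (ltnW ilt)) addnC Fpow_add.
  exact: (Fpow_mono H3).
have tdiv : n = n %/ t * t.
  have Hr : Fpow f (n %% t) M = M.
    by rewrite -{2}Minv {2}(divn_eq n t) addnC Fpow_add Fpow_mul_eq.
  case: (posnP (n %% t)) => Hr0; first by rewrite {1}(divn_eq n t) Hr0 addn0.
  have := tmin (n %% t) (introT (boolp.asboolP _) (conj Hr0 Hr)).
  by rewrite leqNgt ltn_pmod.
have disj0 : forall i j x, i < j -> j < t -> ~ (Fpow f i M x /\ Fpow f j M x).
  move=> i j x ij jt [Hi Hj].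
  have E := SM_inter (SMi i (leq_trans (ltn_trans ij jt) tn))
     (SMi j (leq_trans jt tn)) (ex_intro _ x (conj Hi Hj)).
  have HP : 0 < t - j + i /\ Fpow f (t - j + i) M = M.
    split; first by lia.
    by rewrite Fpow_add E -Fpow_add subnK // ltnW.
  have := tmin _ (introT (boolp.asboolP _) HP).
  have : t - j + i < t by lia.
  by rewrite ltnNge => /negP.
have disj : forall i j x, i < t -> j < t -> i <> j ->
    ~ (Fpow f i M x /\ Fpow f j M x).
  move=> i j x it jt ij; case: (ltngtP i j) => Hij.
  - exact: disj0.
  - by move=> [H1 H2]; apply: (disj0 j i x Hij it).
  - by [].
have cover : forall x, exists i, i < t /\ Fpow f i M x.
  apply: xmin.
  - by case: Mne => x Mx; exists x, 0.
  - by apply: closed_finU => i _; apply: Fpow_closed.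
  - move=> y [l [x [[i [it Hi]] <-]]].
    have Hy : Fpow f i.+1 M (f l x) by exists l, x.
    case: (ltngtP i.+1 t) => Ht.
    + by exists i.+1.
    + by move: Ht; rewrite ltnS leqNgt it.
    + by exists 0; split => //; rewrite -Mt -Ht.
have SMt : forall i, i < t -> SM T f t (Fpow f i M).
  move=> i it; split; first exact: Fpow_ne.
  split; first exact: Fpow_closed.
  split; first by rewrite -Fpow_add addnC Fpow_add Mt.
  move=> C Cne Ccl CM Cinv.
  case: (SMi i (leq_trans it tn)) => _ [_ [_ H]].
  apply: H => //; rewrite tdiv; exact: Fpow_mul_sub.
exists M, t; split; first exact: Fmin_of_SM.
split; first by rewrite t0 tn.
split => //; split => //.
split.
  move=> i it; split; last exact: Fpow_closed.
  pose G := fun j x => j <> i /\ Fpow f j M x.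
  have Gcl : is_closed T (fun x => exists j, j < t /\ G j x).
    apply: closed_finU => j _; case: (eqVneq j i) => [->|ji].
    + apply: (open_eq _ (closed_empty T)) => x; rewrite /G; split => _ //.
      by move=> [].
    + apply: (open_eq _ (Fpow_closed Hcont Hcpt Hhaus j Mcl)) => x.
      rewrite /G; split => H1 H2; apply: H1.
      * by case: H2.
      * by split => //; apply/eqP.
  apply: (open_eq _ Gcl) => x; split.
  - move=> H; case: (cover x) => j [jt Hj].
    case: (eqVneq j i) => [<-|ji] //.
    by case: H; exists j; split => //; split => //; apply/eqP.
  - by move=> Hi [j [jt [ji Hj]]]; apply: (disj i j x it jt) => //; move=> E; apply: ji.
have charac : forall k, (forall i, i < t -> SM T f k (Fpow f i M)) ->
    forall A, Fminimal T f k A <-> exists i, i < t /\ set_eq A (Fpow f i M).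
  move=> k HSM A; split.
  - move=> /(SM_of_Fmin HLam Hcont Hcpt Hhaus) SA.
    case: (SA) => [[x Ax] _]; case: (cover x) => i [it Hi].
    exists i; split => //; rewrite (SM_inter SA (HSM i it)) //.
    by exists x.
  - move=> [i [it /seteqE ->]]; apply: Fmin_of_SM; exact: HSM.
split; first exact: charac.
apply: charac => i it; apply: SMi; exact: leq_trans tn.
Qed.
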